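(* Let $a=p^\gamma$ with $p$ an odd prime and $\gamma\ge1$; write $\phi(a)=2^m d$ with $d$ odd (so $m\ge1$), let $G=(\mathbb{Z}/a\mathbb{Z})^*$ and let $H$ be the maximal subgroup of $G$ of odd order. Let $n$ be a positive integer with $\gcd(n,a)=1$. Let $\mathcal{P}$ be the sequence of prime factors of $n$ counted with multiplicity, let $\mathcal{T}$ be the subsequence of those primes $r$ in $\mathcal{P}$ with $r\bmod a\notin H$, and let $t$ be the length of $\mathcal{T}$. Suppose that the set of residues modulo $a$ of the elements of $\mathcal{P}$ contains $H$. (i) If $t\ge 2^{m-1}$, then $n\notin\mathcal{E}^*_a$. (ii) Fix a primitive root $g$ modulo $p^\gamma$. If $t=2^{m-1}-1$, then $n\in\mathcal{E}^*_a$ if and only if there exists an odd integer $e$ such that every prime $r$ in $\mathcal{T}$ satisfies $r\equiv g^{e'}\pmod{p^\gamma}$ for some integer $e'$ with $e'\equiv e$ or $e'\equiv -e\pmod{2^m}$.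
   Context: For a positive integer $n$, let $R(n;a)$ be the number of pairs $(x,y)$ of positive integers with $\frac{a}{n}=\frac1x+\frac1y$, and $\mathcal{E}^*_a=\{n\in\mathbb{N}:R(n;a)=0,\ \gcd(n,a)=1\}$. *)

(* Defs.v *)
From HB Require Import structures.
From mathcomp Require Import all_boot all_order all_algebra all_fingroup all_solvable.
Set Implicit Arguments. Unset Strict Implicit. Unset Printing Implicit Defensive.
Import GRing.Theory.

(* a/n = 1/x + 1/y  <=>  a*x*y = n*(x+y)  (x, y, n > 0).
   R(n;a) = 0 iff there is no such pair of positive integers. *)
Definition has_rep (a n : nat) : Prop :=
  exists x y : nat, [/\ 0 < x, 0 < y & a * x * y = n * (x + y)].

Definition in_Estar (a n : nat) : Prop :=
  [/\ 0 < n, ~ has_rep a n & coprime n a].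

Definition Gunits (a : nat) : {set {unit 'Z_a}} := [set: {unit 'Z_a}].
Definition Hodd (a : nat) : {set {unit 'Z_a}} := pcore (2)^' (Gunits a).

Definition res_in_H (a r : nat) : bool :=
  [exists u in Hodd a, val u == (r%:R : 'Z_a)%R].

Definition prime_factors_mult (n : nat) : seq nat :=
  flatten [seq nseq pe.2 pe.1 | pe <- prime_decomp n].

Definition Tseq (a n : nat) : seq nat :=
  [seq r <- prime_factors_mult n | ~~ res_in_H a r].

Definition primitive_root_mod (a g : nat) : Prop :=
  coprime g a /\ forall k, 0 < k < totient a -> g ^ k %% a <> 1 %% a.

(* Main.v *)
Require Import Defs.
From mathcomp Require Import all_boot all_order all_algebra all_fingroup all_solvable.
From mathcomp Require Import zify ring lra.
Set Implicit Arguments. Unset Strict Implicit. Unset Printing Implicit Defensive.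
Import GRing.Theory Num.Theory.

Lemma rep_of_divs a n u v : 0 < n -> 0 < u -> 0 < v -> u %| n -> v %| n ->
  a %| u + v -> 0 < a -> has_rep a n.
Proof.
move=> n0 u0 v0 /dvdnP [n1 En1] /dvdnP [n2 En2] /dvdnP [w Ew] a0.
have w0 : 0 < w by nia.
have p1 : 0 < n1 by nia.
have p2 : 0 < n2 by nia.
by exists (n1 * w), (n2 * w); split; nia.
Qed.

Lemma divs_of_rep a n : 0 < n -> coprime n a -> has_rep a n ->
  exists u v, [/\ 0 < u, 0 < v, u * v %| n & a %| u + v].
Proof.
move=> n0 cna [x [y [x0 y0 E]]].
set g := gcdn x y.
have g0 : 0 < g by rewrite gcdn_gt0 x0.
have [x' Ex] : exists x', x = x' * g by apply/dvdnP; apply: dvdn_gcdl.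
have [y' Ey] : exists y', y = y' * g by apply/dvdnP; apply: dvdn_gcdr.
have cxy : coprime x' y'.
  have : g = gcdn x' y' * g by rewrite muln_gcdl -Ex -Ey.
  rewrite /coprime; move=> H; apply/eqP; nia.
have x'0 : 0 < x' by nia.
have y'0 : 0 < y' by nia.
have E' : a * x' * y' * g = n * (x' + y') by nia.
have c1 : coprime (x' * y') (x' + y').
  have H : gcdn x' y' = 1 by apply/eqP.
  by rewrite coprimeMl /coprime gcdnDl gcdnDr (gcdnC y') H.
have dv : x' * y' %| n.
  rewrite -(Gauss_dvdl n c1) -E'; apply/dvdnP; exists (a * g); lia.
exists x', y'; split => //.
have [k Ek] := dvdnP dv.
have ag : a * g = k * (x' + y') by nia.
have cak : coprime a k.
  rewrite coprime_sym; apply: coprime_dvdl cna; rewrite Ek; apply: dvdn_mulr.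
  exact: dvdnn.
rewrite -(Gauss_dvdr _ cak) -ag; apply: dvdn_mulr; exact: dvdnn.
Qed.

Local Open Scope ring_scope.

Fixpoint ss (s : seq int) (z : int) : Prop :=
  match s with
  | [::] => z = 0
  | x :: s' => [\/ ss s' z, ss s' (z - x) | ss s' (z + x)]
  end.

Lemma ss_zero s : ss s 0.
Proof. by elim: s => [|x s IH] //=; apply: Or31. Qed.

Lemma ss_eq s z z' : z = z' -> ss s z -> ss s z'.
Proof. by move->. Qed.

Lemma ss_cons_add x s z : ss s z -> ss (x :: s) (z + x).
Proof. by move=> H; apply: Or32; rewrite addrK. Qed.

Lemma ss_cons_sub x s z : ss s z -> ss (x :: s) (z - x).
Proof. by move=> H; apply: Or33; rewrite subrK. Qed.

Lemma ss_cons_skip x s z : ss s z -> ss (x :: s) z.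
Proof. by move=> H; apply: Or31. Qed.

Lemma ss_consP x s z : ss (x :: s) z ->
  exists2 z0, ss s z0 & [\/ z = z0, z = z0 + x | z = z0 - x].
Proof.
case=> H; [exists z => //; exact: Or31 | exists (z - x) => //; apply: Or32 | exists (z + x) => //; apply: Or33].
  by rewrite subrK. by rewrite addrK.
Qed.

Lemma ss_mem x s : x \in s -> ss s x.
Proof.
elim: s => [|y s IH] //; rewrite inE => /orP [/eqP-> | /IH H].
  by apply: (ss_eq (add0r y)); apply: ss_cons_add; apply: ss_zero.
exact: ss_cons_skip.
Qed.

Lemma ss_cat s1 s2 z1 z2 : ss s1 z1 -> ss s2 z2 -> ss (s1 ++ s2) (z1 + z2).
Proof.
elim: s1 z1 => [|x s IH] z1 /=; first by move=> -> H; rewrite add0r.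
move=> H H2; have [z0 H0 Hz] := ss_consP H; have := IH _ H0 H2.
case: Hz => ->; [apply: ss_cons_skip | |].
  by move=> H3; apply: (ss_eq _ (ss_cons_add x H3)); ring.
by move=> H3; apply: (ss_eq _ (ss_cons_sub x H3)); ring.
Qed.

Lemma ss_ins s1 s2 x z : ss (s1 ++ s2) z ->
  [/\ ss (s1 ++ x :: s2) z, ss (s1 ++ x :: s2) (z + x) & ss (s1 ++ x :: s2) (z - x)].
Proof.
elim: s1 z => [|y s IH] z /=.
  by move=> H; split; [apply: ss_cons_skip | apply: ss_cons_add | apply: ss_cons_sub].
move=> H; have [z0 H0 Hz] := ss_consP H; have [A B C] := IH _ H0.
case: Hz => ->; split.
- exact: ss_cons_skip.
- exact: ss_cons_skip.
- exact: ss_cons_skip.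
- exact: ss_cons_add.
- by apply: (ss_eq _ (ss_cons_add y B)); ring.
- by apply: (ss_eq _ (ss_cons_add y C)); ring.
- exact: ss_cons_sub.
- by apply: (ss_eq _ (ss_cons_sub y B)); ring.
- by apply: (ss_eq _ (ss_cons_sub y C)); ring.
Qed.

Lemma rem_split (x : int) s : x \in s ->
  exists s1 s2, s = s1 ++ x :: s2 /\ rem x s = s1 ++ s2.
Proof.
elim: s => [|y s IH] //; rewrite inE /=; case: (eqVneq y x) => [-> _ | ne].
  by exists [::], s.
move=> /= /IH [s1 [s2 [-> ->]]].
by exists (y :: s1), s2.
Qed.

Lemma ss_rem x s z : x \in s -> ss (x :: rem x s) z -> ss s z.
Proof.
move=> /rem_split [s1 [s2 [-> ->]]] H; have [z0 H0 Hz] := ss_consP H.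
have [A B C] := ss_ins x H0; by case: Hz => ->.
Qed.

Lemma ss_scale s z c : ss s z -> ss (map (fun x => x * c) s) (z * c).
Proof.
elim: s z => [|x s IH] z /=; first by move->; rewrite mul0r.
case=> /IH H; [apply: Or31 | apply: Or32 | apply: Or33] => //; move: H.
  by rewrite mulrBl. by rewrite mulrDl.
Qed.

Definition ev (x : int) := (2 %| x)%Z.
Definition ocons (b : option int) (s : seq int) := if b is Some y then y :: s else s.

Lemma ocons_cat b s : ocons b s = ocons b [::] ++ s.
Proof. by case: b. Qed.

Lemma four_dvd k : ((4:int) %| (2:int) ^+ k.+2)%Z.
Proof. by rewrite !exprS mulrA; apply: dvdz_mulr. Qed.

Lemma pair_nz k y x : ~~ ev y -> ~~ ev x ->
  ~~ (2 ^+ k.+2 %| y + x)%Z || ~~ (2 ^+ k.+2 %| y - x)%Z.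
Proof.
rewrite /ev => Hy Hx; rewrite -negb_and; apply/negP => /andP [H1 H2].
have H3 := dvdz_trans (four_dvd k) H1; have H4 := dvdz_trans (four_dvd k) H2.
lia.
Qed.

Lemma reduce k s b : (forall x, x \in s -> ~~ (2 ^+ k.+2 %| x)%Z) ->
  (forall y, b = Some y -> ~~ ev y) ->
  exists c, [/\ forall x, x \in c -> ev x && ~~ (2 ^+ k.+2 %| x)%Z,
    forall z, ss c z -> ss (ocons b s) z &
    (size s + count ev s + (b != None) <= (size c).*2.+1)%N].
Proof.
elim: s b => [|x s IH] b Hs Hb.
  exists [::]; split => //; first by move=> z /= ->; apply: ss_zero.
  by case: b Hb.
have Hx : ~~ (2 ^+ k.+2 %| x)%Z by apply: Hs; rewrite inE eqxx.
have Hs' : forall x, x \in s -> ~~ (2 ^+ k.+2 %| x)%Z.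
  by move=> z Hz; apply: Hs; rewrite inE Hz orbT.
case: (boolP (ev x)) => ex.
  have [c [Hc1 Hc2 Hc3]] := IH b Hs' Hb.
  exists (x :: c); split.
  - move=> z; rewrite inE => /orP [/eqP -> | /Hc1 //]; by rewrite ex Hx.
  - move=> z /ss_consP [z0 /Hc2 H0 Hz].
    rewrite ocons_cat in H0; rewrite [ocons b (x :: s)]ocons_cat.
    have [A B C] := ss_ins x H0.
    by case: Hz => ->.
  - move: Hc3; rewrite /= ex /=; lia.
case: b Hb => [y|] Hb.
  have ey : ~~ ev y by apply: Hb.
  have [c [Hc1 Hc2 Hc3]] := IH None Hs' (fun _ (e : None = _) => ltac:(done)).
  pose c0 := if ~~ (2 ^+ k.+2 %| y + x)%Z then y + x else y - x.
  have Hc0 : ev c0 && ~~ (2 ^+ k.+2 %| c0)%Z.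
    rewrite /c0; case: ifP => H.
      by rewrite H andbT; move: ex ey; rewrite /ev; lia.
    have := pair_nz k ey ex; rewrite H /= => ->; rewrite andbT.
    by move: ex ey; rewrite /ev; lia.
  exists (c0 :: c); split.
  - by move=> z; rewrite inE => /orP [/eqP -> | /Hc1 //].
  - move=> z /ss_consP [z0 /Hc2 /= H0 Hz]; change (ss (y :: x :: s) z).
    have H1 := ss_cons_add x H0; have H2 := ss_cons_sub x H0.
    case: Hz => ->; first by do 2 apply: ss_cons_skip.
      rewrite /c0; case: ifP => _.
        by apply: (ss_eq _ (ss_cons_add y H1)); ring.
      by apply: (ss_eq _ (ss_cons_add y H2)); ring.
    rewrite /c0; case: ifP => _.
      by apply: (ss_eq _ (ss_cons_sub y H2)); ring.
    by apply: (ss_eq _ (ss_cons_sub y H1)); ring.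
  - move: Hc3; rewrite /= (negbTE ex) /=; lia.
have [c [Hc1 Hc2 Hc3]] := IH (Some x) Hs' (fun y (e : Some x = Some y) => ltac:(by case: e => <-)).
exists c; split => //.
move: Hc3; rewrite /= (negbTE ex) /=; lia.
Qed.

Definition nzk k (s : seq int) := forall x, x \in s -> ~~ (2 ^+ k.+1 %| x)%Z.
Definition hit k s := exists z, ss s z /\ (2 ^+ k.+1 %| z - 2 ^+ k)%Z.

Lemma half_lift c w : (forall x, x \in c -> ev x) ->
  ss (map (fun x => (x %/ 2)%Z) c) w -> ss c (w * 2).
Proof.
move=> Hc /(ss_scale 2); rewrite -map_comp; congr ss.
rewrite -[RHS]map_id; apply/eq_in_map => x /Hc /= H; exact: divzK.
Qed.

Lemma half_nz k x : ev x -> ~~ (2 ^+ k.+2 %| x)%Z -> ~~ (2 ^+ k.+1 %| (x %/ 2)%Z)%Z.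
Proof.
move=> ex; apply: contra => H; rewrite -(divzK ex) [2 ^+ k.+2]exprSr.
by apply: dvdz_mul.
Qed.

Lemma hit_double k w : (2 ^+ k.+1 %| w - 2 ^+ k)%Z -> (2 ^+ k.+2 %| w * 2 - 2 ^+ k.+1)%Z.
Proof.
move=> H; have -> : w * 2 - 2 ^+ k.+1 = (w - 2 ^+ k) * 2 by rewrite exprSr; ring.
by rewrite [2 ^+ k.+2]exprSr; apply: dvdz_mul.
Qed.

Lemma step k (IH : forall s, nzk k s -> (2 ^ k <= size s)%N -> hit k s) s :
  nzk k.+1 s -> (2 ^ k.+1 <= size s + count ev s)%N -> hit k.+1 s.
Proof.
move=> Hs Hsz.
have [c [Hc1 Hc2 Hc3]] := reduce (b := None) Hs (fun _ (e : None = _) => ltac:(done)).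
have Hsz' : (2 ^ k <= size (map (fun x => (x %/ 2)%Z) c))%N.
  by rewrite size_map; move: Hc3 Hsz; rewrite expnS /=; lia.
have Hn : nzk k (map (fun x => (x %/ 2)%Z) c).
  move=> x /mapP [y Hy ->]; have /andP [H1 H2] := Hc1 _ Hy; exact: half_nz.
have [w [Hw Hd]] := IH _ Hn Hsz'.
exists (w * 2); split; last exact: hit_double.
apply: Hc2; apply: half_lift => // x /Hc1 /andP [] //.
Qed.

Lemma hit_big k : forall s, nzk k s -> (2 ^ k <= size s)%N -> hit k s.
Proof.
elim: k => [|k IH] s Hs Hsz.
  case: s Hs Hsz => [|x s] // Hs _; exists x; split.
    by apply: (ss_eq (add0r x)); apply: ss_cons_add; apply: ss_zero.
  have := Hs x; rewrite inE eqxx => /(_ isT); rewrite expr1 expr0; lia.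
by apply: step => //; lia.
Qed.

Lemma allodd k s : nzk k.+1 s -> (2 ^ k.+1 <= (size s).+1)%N -> ~ hit k.+1 s ->
  forall x, x \in s -> ~~ ev x.
Proof.
move=> Hs Hsz Hh x Hx; apply/negP => ex; apply: Hh; apply: (step (@hit_big k)) => //.
have : has ev s by apply/hasP; exists x.
by rewrite has_count; lia.
Qed.

Lemma ev_half_dvd4 c0 : ((4:int) %| c0)%Z -> ev (c0 %/ 2)%Z.
Proof.
case/dvdzP => q ->; have -> : q * 4 = (q * 2) * 2 by ring.
by rewrite mulzK // /ev; apply: dvdz_mull; apply: dvdzz.
Qed.

Lemma pm k s : nzk k.+1 s -> (2 ^ k.+1 <= (size s).+1)%N -> ~ hit k.+1 s ->
  exists e, ~~ ev e /\
    forall x, x \in s -> (2 ^+ k.+2 %| x - e)%Z || (2 ^+ k.+2 %| x + e)%Z.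
Proof.
move=> Hs Hsz Hh; have Hodd := allodd Hs Hsz Hh.
case: s Hs Hsz Hh Hodd => [|a s'] Hs Hsz Hh Hodd.
  by move: Hsz; rewrite /= expnS; have := expn_gt0 2 k; lia.
have ea : ~~ ev a by apply: Hodd; rewrite inE eqxx.
exists a; split => // x Hx; have ex := Hodd x Hx.
apply/negPn/negP => Hn.
case: k Hs Hsz Hh Hn => [|k] Hs Hsz Hh Hn.
  by move: Hn; have -> : (2:int) ^+ 2 = 4 by []; move: ex ea; rewrite /ev; lia.
move/norP: Hn => [n1 n2].
have xa : x != a by apply: contraNneq n1 => ->; rewrite subrr dvdz0.
have Hx' : x \in s' by move: Hx; rewrite inE (negbTE xa).
pose rest := rem x s'.
pose c0 := if ((4:int) %| x + a)%Z then x + a else x - a.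
have c04 : ((4:int) %| c0)%Z by rewrite /c0; case: ifP => // H; move: ex ea H; rewrite /ev; lia.
have c0n : ~~ (2 ^+ k.+3 %| c0)%Z by rewrite /c0; case: ifP.
have Hrest : nzk k.+2 rest by move=> z /mem_rem Hz; apply: Hs; rewrite inE Hz orbT.
have [c [Hc1 Hc2 Hc3]] := reduce (b := None) Hrest (fun _ (e : None = _) => ltac:(done)).
pose l := map (fun x => (x %/ 2)%Z) (c0 :: c).
have c0e : ev c0 by move: c04; rewrite /ev; lia.
have Hl : nzk k.+1 l.
  move=> z /mapP [y]; rewrite inE => /orP [/eqP -> -> | Hy ->]; first exact: half_nz.
  by have /andP [H1 H2] := Hc1 _ Hy; apply: half_nz.
have Hszl : (2 ^ k.+1 <= (size l).+1)%N.
  have : (0 < size s')%N by case: (s') Hx'.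
  move: Hc3 Hsz; rewrite /l /rest /= size_rem // size_map expnS -mul2n; set X := (2 ^ k.+1)%N; set C := count _ _; set S := size s'; set D := size c; lia.
have HcS : forall z, ss (c0 :: c) z -> ss (a :: s') z.
  move=> z /ss_consP [z0 /Hc2 H0 Hz].
  have Hr : forall t, ss (x :: rest) t -> ss s' t by move=> t; apply: ss_rem.
  case: Hz => ->.
  - by apply: ss_cons_skip; apply: Hr; apply: ss_cons_skip.
  - rewrite /c0; case: ifP => _.
      by apply: (ss_eq _ (ss_cons_add a (Hr _ (ss_cons_add x H0)))); ring.
    by apply: (ss_eq _ (ss_cons_sub a (Hr _ (ss_cons_add x H0)))); ring.
  - rewrite /c0; case: ifP => _.
      by apply: (ss_eq _ (ss_cons_sub a (Hr _ (ss_cons_sub x H0)))); ring.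
    by apply: (ss_eq _ (ss_cons_add a (Hr _ (ss_cons_sub x H0)))); ring.
have Hnh : ~ hit k.+1 l.
  move=> [w [Hw Hd]]; apply: Hh; exists (w * 2); split; last exact: hit_double.
  apply: HcS; apply: half_lift Hw => y; rewrite inE => /orP [/eqP -> // | /Hc1 /andP []//].
have := allodd Hl Hszl Hnh (mem_head _ _).
by rewrite ev_half_dvd4.
Qed.

Lemma absz_pm1 (j : int) n : (absz j <= n)%N ->
  (absz (j + 1)%R <= n.+1)%N /\ (absz (j - 1)%R <= n.+1)%N.
Proof. move=> H; split; lia. Qed.

Lemma ss_pm k s e z :
  (forall x, x \in s -> (2 ^+ k.+1 %| x - e)%Z || (2 ^+ k.+1 %| x + e)%Z) ->
  ss s z -> exists j : int, (absz j <= size s)%N /\ (2 ^+ k.+1 %| z - j * e)%Z.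
Proof.
elim: s z => [|x s IH] z Hs /=.
  by move=> ->; exists 0; rewrite mul0r subr0 dvdz0.
move=> H; have [z0 H0 Hz] := ss_consP H.
have [j [Hj1 Hj2]] := IH z0 (fun y Hy => Hs y (@mem_behead _ (x :: s) _ Hy)) H0.
have := Hs x (mem_head _ _) => /orP [Hx | Hx]; case: Hz => ->.
- by exists j; split => //=; apply: leqW.
- exists (j + 1); split; first by rewrite /=; case: (absz_pm1 Hj1).
  have -> : z0 + x - (j + 1) * e = (z0 - j * e) + (x - e) by ring.
  exact: rpredD.
- exists (j - 1); split; first by rewrite /=; case: (absz_pm1 Hj1).
  have -> : z0 - x - (j - 1) * e = (z0 - j * e) - (x - e) by ring.
  exact: rpredB.
- by exists j; split => //=; apply: leqW.
- exists (j - 1); split; first by rewrite /=; case: (absz_pm1 Hj1).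
  have -> : z0 + x - (j - 1) * e = (z0 - j * e) + (x + e) by ring.
  exact: rpredD.
- exists (j + 1); split; first by rewrite /=; case: (absz_pm1 Hj1).
  have -> : z0 - x - (j + 1) * e = (z0 - j * e) - (x + e) by ring.
  exact: rpredB.
Qed.

Lemma nohit k s e : ~~ ev e ->
  (forall x, x \in s -> (2 ^+ k.+1 %| x - e)%Z || (2 ^+ k.+1 %| x + e)%Z) ->
  (size s < 2 ^ k)%N -> ~ hit k s.
Proof.
move=> oe Hs Hsz [z [Hz Hd]].
have [j [Hj1 Hj2]] := ss_pm Hs Hz.
have H1 : (2 ^+ k.+1 %| j * e - 2 ^+ k)%Z.
  have -> : j * e - 2 ^+ k = (z - 2 ^+ k) - (z - j * e) by ring.
  exact: rpredB.
have H2 : (2 ^+ k %| j * e)%Z.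
  have -> : j * e = (j * e - 2 ^+ k) + 2 ^+ k by ring.
  apply: rpredD; last exact: dvdzz.
  apply: dvdz_trans H1; rewrite exprSr; apply: dvdz_mulr; exact: dvdzz.
have H3 : (2 ^ k %| absz j)%N.
  move: H2; rewrite dvdzE abszM abszX /= Gauss_dvdl //.
  apply: coprimeXl; rewrite coprime2n.
  by move: oe; rewrite /ev dvdzE /= dvdn2 negbK.
have j0 : absz j = 0%N.
  apply/eqP; apply: contraTT H3 => Hj; rewrite -lt0n in Hj.
  by rewrite gtnNdvd //; apply: leq_ltn_trans Hsz.
have : (2 ^ k.+1 %| 2 ^ k)%N.
  move: H1; rewrite dvdzE; move/eqP: j0; rewrite absz_eq0 => /eqP ->.
  by rewrite mul0r sub0r abszN !abszX.
move/dvdn_leq; rewrite expn_gt0 /= => /(_ isT); rewrite expnS; have := expn_gt0 2 k; set X := (2 ^ k)%N; lia.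
Qed.

Lemma natZp_eq a x y : (1 < a)%N -> ((x%:R : 'Z_a) = y%:R) <-> (x %% a = y %% a)%N.
Proof.
move=> a1; split => [E | E]; first by rewrite -!(val_Zp_nat a1) E.
by apply: val_inj; rewrite /= !(val_Zp_nat a1).
Qed.

Lemma Zp1E a : (1 : 'Z_a) = 1%:R. Proof. by rewrite mulr1n. Qed.

Lemma gz_unit a g : (1 < a)%N -> primitive_root_mod a g -> (g%:R : 'Z_a) \is a GRing.unit.
Proof. by move=> a1 [cg _]; rewrite unitZpE // coprime_sym. Qed.

Lemma gz_phi a g : (1 < a)%N -> primitive_root_mod a g -> (g%:R : 'Z_a) ^+ totient a = 1.
Proof.
move=> a1 [cg _]; rewrite -natrX Zp1E; apply/natZp_eq => //.
exact: Euler_exp_totient.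
Qed.

Lemma gz_pow_mod a g k : (1 < a)%N -> primitive_root_mod a g ->
  (g%:R : 'Z_a) ^+ k = (g%:R : 'Z_a) ^+ (k %% totient a).
Proof.
move=> a1 Hg; rewrite {1}(divn_eq k (totient a)) exprD mulnC exprM gz_phi //.
by rewrite expr1n mul1r.
Qed.

Lemma F1 a g k : (1 < a)%N -> primitive_root_mod a g ->
  ((g%:R : 'Z_a) ^+ k == 1) = (totient a %| k)%N.
Proof.
move=> a1 Hg; rewrite gz_pow_mod // /dvdn.
have p0 : (0 < totient a)%N by rewrite totient_gt0; lia.
case: (posnP (k %% totient a)) => [-> | H]; first by rewrite expr0 eqxx.
apply/negbTE/eqP => E.
case: Hg => _ /(_ (k %% totient a)%N); rewrite H ltn_pmod //= => /(_ isT); apply.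
by apply/natZp_eq => //; rewrite natrX E Zp1E.
Qed.

Lemma exprz_mod a g z : (1 < a)%N -> primitive_root_mod a g ->
  (g%:R : 'Z_a) ^ z = (g%:R : 'Z_a) ^+ `|(z %% totient a)%Z|%N.
Proof.
move=> a1 Hg; have p0 : (0 < totient a)%N by rewrite totient_gt0; lia.
rewrite {1}(divz_eq z (totient a)) exprzDr ?gz_unit // (mulrC (z %/ _)%Z) -exprz_exp.
rewrite -exprnP gz_phi // exp1rz mul1r exprnP gez0_abs // modz_ge0 //.
by rewrite -lt0n.
Qed.

Lemma F1z a g z : (1 < a)%N -> primitive_root_mod a g ->
  ((g%:R : 'Z_a) ^ z == 1) = (totient a %| z)%Z.
Proof.
move=> a1 Hg; have p0 : (0 < totient a)%N by rewrite totient_gt0; lia.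
rewrite exprz_mod // F1 //.
have lt : (`|(z %% totient a)%Z| < totient a)%N.
  have := ltz_pmod z (ltac:(by rewrite ltz_nat) : (0 < (totient a)%:Z)).
  have := modz_ge0 z (ltac:(by rewrite -lt0n) : (totient a)%:Z != 0); lia.
apply/idP/idP => H.
  apply/dvdz_mod0P; apply/eqP; rewrite -absz_eq0; apply/eqP.
  by apply/eqP; apply: contraTT H => Hn; rewrite gtnNdvd // lt0n.
by move/dvdz_mod0P: H => ->.
Qed.

Lemma gz_eq a g z1 z2 : (1 < a)%N -> primitive_root_mod a g ->
  ((g%:R : 'Z_a) ^ z1 == (g%:R : 'Z_a) ^ z2) = (totient a %| z1 - z2)%Z.
Proof.
move=> a1 Hg; rewrite -(F1z _ a1 Hg).
have u := gz_unit a1 Hg.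
have -> : (g%:R : 'Z_a) ^ z1 = (g%:R : 'Z_a) ^ (z1 - z2) * (g%:R : 'Z_a) ^ z2.
  by rewrite -exprzDr // subrK.
apply/eqP/eqP => [E | ->]; last by rewrite mul1r.
apply: (mulIr (unitrXz z2 u)); by rewrite mul1r.
Qed.

Lemma unit_eq1 a (u : {unit 'Z_a}) : (u == 1)%g = (val u == 1).
Proof. by rewrite -(inj_eq val_inj) FinRing.val_unit1. Qed.

Lemma gz_order a g (a1 : (1 < a)%N) (Hg : primitive_root_mod a g) :
  #[FinRing.Unit (gz_unit a1 Hg)]%g = totient a.
Proof.
have H k : (#[FinRing.Unit (gz_unit a1 Hg)]%g %| k)%N = (totient a %| k)%N.
  by rewrite order_dvdn unit_eq1 FinRing.val_unitX /= F1.
by apply/eqP; rewrite eqn_dvd H dvdnn -H dvdnn.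
Qed.

Lemma F2 a g x : (1 < a)%N -> primitive_root_mod a g -> x \is a GRing.unit ->
  exists k, x = (g%:R : 'Z_a) ^+ k.
Proof.
move=> a1 Hg Hx; set w := FinRing.Unit (gz_unit a1 Hg).
have Hc : <[w]>%g = [set: {unit 'Z_a}].
  apply/eqP; rewrite eqEcard subsetT /= -orderE gz_order.
  by rewrite -[[set: _]]/(units_Zp a) card_units_Zp //; lia.
have : FinRing.Unit Hx \in <[w]>%g by rewrite Hc inE.
case/cycleP => k Ek; exists k.
by rewrite -[x]/(val (FinRing.Unit Hx)) Ek FinRing.val_unitX.
Qed.

Lemma F3 a g m d (u : {unit 'Z_a}) k : (1 < a)%N -> primitive_root_mod a g ->
  totient a = (2 ^ m * d)%N -> odd d -> val u = (g%:R : 'Z_a) ^+ k ->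
  (u \in Hodd a) = (2 ^ m %| k)%N.
Proof.
move=> a1 Hg Ephi od Eu.
have d0 : (0 < d)%N by case: (d) od.
rewrite /Hodd /Gunits.
rewrite (mem_normal_Hall (nilpotent_pcore_Hall _ (abelian_nil (units_Zp_abelian a))) (pcore_normal _ _)) ?inE //.
rewrite /p_elt p'natE //.
have Hk n : (#[u]%g %| n)%N = (totient a %| k * n)%N.
  by rewrite order_dvdn unit_eq1 FinRing.val_unitX Eu -exprM F1.
have o1 : (#[u]%g %| 2 ^ m * d)%N by rewrite Hk -Ephi dvdn_mull.
have E2 : (#[u]%g %| d)%N = (2 ^ m %| k)%N by rewrite Hk Ephi dvdn_pmul2r.
rewrite -E2; apply/idP/idP => H.
  have c : coprime #[u]%g (2 ^ m) by apply: coprimeXr; rewrite coprimen2; move: H; rewrite dvdn2 negbK.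
  by rewrite -(Gauss_dvdr _ c).
by apply/negP => H2; move: (dvdn_trans H2 H); rewrite dvdn2 od.
Qed.

Lemma Zp_m1_neq1 a : (2 < a)%N -> (-1 : 'Z_a) != 1.
Proof.
move=> a2; apply/eqP => E.
have : (2%:R : 'Z_a) = 0%:R by rewrite mulr2n -{1}E addNr.
by move/natZp_eq => /(_ (ltnW a2)); rewrite mod0n modn_small.
Qed.

Lemma F4 a g : (2 < a)%N -> primitive_root_mod a g -> (2 %| totient a)%N ->
  (g%:R : 'Z_a) ^+ (totient a %/ 2) = -1.
Proof.
move=> a2 Hg ev; have a1 : (1 < a)%N by lia.
have [k Ek] := F2 a1 Hg (unitrN1 _).
set h := (totient a %/ 2)%N.
have Eh : totient a = (h * 2)%N by rewrite divnK.
have : (totient a %| k * 2)%N by rewrite -(F1 _ a1 Hg) exprM -Ek expr2 mulrNN mulr1.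
rewrite Eh dvdn_pmul2r // => /dvdnP [j Ej].
have := Zp_m1_neq1 a2; rewrite Ek Ej.
have -> : (j * h = (h * 2) * (j %/ 2) + (j %% 2) * h)%N.
  by rewrite {1}(divn_eq j 2); lia.
rewrite exprD exprM -Eh gz_phi // expr1n mul1r.
have : (j %% 2 < 2)%N by apply: ltn_pmod.
case: (j %% 2)%N => [|[|//]] _ H; first by rewrite mul0n expr0 eqxx in H.
by rewrite mul1n.
Qed.

Fixpoint sp (s : seq nat) (u v : nat) : Prop :=
  match s with
  | [::] => u = 1%N /\ v = 1%N
  | r :: s' => [\/ sp s' u v, exists2 u', u = (r * u')%N & sp s' u' v
                | exists2 v', v = (r * v')%N & sp s' u v']
  end.

Lemma sp_dvd s u v : sp s u v -> (u * v %| \prod_(r <- s) r)%N.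
Proof.
elim: s u v => [|r s IH] u v /=; first by case=> -> ->; rewrite big_nil.
rewrite big_cons; case=> [/IH H | [u' -> /IH H] | [v' -> /IH H]].
- by apply: dvdn_mull.
- by rewrite -mulnA; apply: dvdn_mul (dvdnn r) H.
- by rewrite mulnCA; apply: dvdn_mul (dvdnn r) H.
Qed.

Lemma sp_of_dvd s u v : all prime s -> (u * v %| \prod_(r <- s) r)%N -> sp s u v.
Proof.
elim: s u v => [|r s IH] u v /=.
  by rewrite big_nil dvdn1 muln_eq1 => _ /andP [/eqP -> /eqP ->].
case/andP => pr ps; rewrite big_cons => H.
case: (boolP (r %| u)%N) => [/dvdnP [u' Eu] | nu].
  apply: Or32; exists u'; first by rewrite Eu mulnC.
  apply: IH => //; move: H; rewrite Eu (_ : (u' * r * v = r * (u' * v))%N); last by lia.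
  by rewrite dvdn_pmul2l ?prime_gt0.
case: (boolP (r %| v)%N) => [/dvdnP [v' Ev] | nv].
  apply: Or33; exists v'; first by rewrite Ev mulnC.
  apply: IH => //; move: H; rewrite Ev (_ : (u * (v' * r) = r * (u * v'))%N); last by lia.
  by rewrite dvdn_pmul2l ?prime_gt0.
apply: Or31; apply: IH => //.
have c : coprime (u * v) r.
  by rewrite coprime_sym prime_coprime // Euclid_dvdM // negb_or nu nv.
by rewrite -(Gauss_dvdr _ c).
Qed.

Lemma prod_pfm n : (0 < n)%N -> \prod_(r <- prime_factors_mult n) r = n.
Proof.
move=> n0; rewrite {2}(prod_prime_decomp n0) /prime_factors_mult big_flatten /= big_map.
by apply: eq_bigr => pe _; rewrite big_nseq iter_muln_1.
Qed.

Lemma mem_pfm n r : r \in prime_factors_mult n -> prime r /\ (r %| n)%N.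
Proof.
case/flattenP => s /mapP [[p e] Hpe ->] /nseqP [/= Er He].
have [pp e0 dv] := mem_prime_decomp Hpe; rewrite Er; split => //.
by apply: dvdn_trans dv; rewrite -{1}(expn1 p) dvdn_exp2l.
Qed.

Lemma sp_ss a (x : 'Z_a) (K : nat -> int) s u v : x \is a GRing.unit ->
  (forall r, r \in s -> (r%:R : 'Z_a) = x ^ K r) -> sp s u v ->
  exists z, ss (map K s) z /\ (u%:R : 'Z_a) = v%:R * x ^ z.
Proof.
move=> xu; elim: s u v => [|r s IH] u v Hs.
  by case=> -> ->; exists 0; split => //; rewrite expr0z mulr1.
have Hr := Hs r (mem_head _ _).
have Hs' : forall r', r' \in s -> (r'%:R : 'Z_a) = x ^ K r'.
  by move=> r' H; apply: Hs; rewrite inE H orbT.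
case=> [/(IH _ _ Hs') [z [Hz E]] | [u' -> /(IH _ _ Hs') [z [Hz E]]] | [v' -> /(IH _ _ Hs') [z [Hz E]]]].
- by exists z; split => //; apply: ss_cons_skip.
- exists (z + K r); split; first exact: ss_cons_add.
  by rewrite natrM E Hr exprzDr //; ring.
- exists (z - K r); split; first exact: ss_cons_sub.
  have Ez : x ^ z = x ^ (z - K r) * x ^ K r by rewrite -exprzDr // subrK.
  by rewrite natrM Hr E Ez; ring.
Qed.

Lemma ss_sp a (x : 'Z_a) (K : nat -> int) s z : x \is a GRing.unit ->
  (forall r, r \in s -> (r%:R : 'Z_a) = x ^ K r) -> ss (map K s) z ->
  exists u v, sp s u v /\ (u%:R : 'Z_a) = v%:R * x ^ z.
Proof.
move=> xu; elim: s z => [|r s IH] z Hs.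
  by move=> ->; exists 1%N, 1%N; split => //; rewrite expr0z mulr1.
have Hr := Hs r (mem_head _ _).
have Hs' : forall r', r' \in s -> (r'%:R : 'Z_a) = x ^ K r'.
  by move=> r' H; apply: Hs; rewrite inE H orbT.
case=> [/(IH _ Hs') [u [v [Hu E]]] | /(IH _ Hs') [u [v [Hu E]]] | /(IH _ Hs') [u [v [Hu E]]]].
- by exists u, v; split => //; apply: Or31.
- exists (r * u)%N, v; split; first by apply: Or32; exists u.
  have Ez : x ^ z = x ^ (z - K r) * x ^ K r by rewrite -exprzDr // subrK.
  by rewrite natrM E Hr Ez; ring.
- exists u, (r * v)%N; split; first by apply: Or33; exists v.
  by rewrite natrM E Hr exprzDr //; ring.
Qed.

Lemma ss_split (f : nat -> int) (q : pred nat) s z : ss (map f s) z ->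
  exists z1 z2, [/\ ss (map f (filter q s)) z1, ss (map f (filter (predC q) s)) z2 & z = z1 + z2].
Proof.
elim: s z => [|r s IH] z /=; first by move=> ->; exists 0, 0; rewrite addr0.
move/ss_consP => [z0 /IH [z1 [z2 [H1 H2 E]]] Hz].
case: (q r) => /=.
- case: Hz => ->.
  + by exists z1, z2; split => //; apply: ss_cons_skip.
  + by exists (z1 + f r), z2; split => //; [apply: ss_cons_add | rewrite E; ring].
  + by exists (z1 - f r), z2; split => //; [apply: ss_cons_sub | rewrite E; ring].
- case: Hz => ->.
  + by exists z1, z2; split => //; apply: ss_cons_skip.
  + by exists z1, (z2 + f r); split => //; [apply: ss_cons_add | rewrite E; ring].
  + by exists z1, (z2 - f r); split => //; [apply: ss_cons_sub | rewrite E; ring].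
Qed.

Lemma ss_merge (f : nat -> int) (q : pred nat) s z1 z2 :
  ss (map f (filter q s)) z1 -> ss (map f (filter (predC q) s)) z2 -> ss (map f s) (z1 + z2).
Proof.
elim: s z1 z2 => [|r s IH] z1 z2 /=; first by move=> -> ->; rewrite addr0.
case: (q r) => /=.
- move=> /ss_consP [z0 H0 Hz] H2; have H := IH _ _ H0 H2.
  case: Hz => ->; first by apply: ss_cons_skip.
    by apply: (ss_eq _ (ss_cons_add (f r) H)); ring.
  by apply: (ss_eq _ (ss_cons_sub (f r) H)); ring.
- move=> H1 /ss_consP [z0 H0 Hz]; have H := IH _ _ H1 H0.
  case: Hz => ->; first by apply: ss_cons_skip.
    by apply: (ss_eq _ (ss_cons_add (f r) H)); ring.
  by apply: (ss_eq _ (ss_cons_sub (f r) H)); ring.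
Qed.

Lemma ss_dvd (D : int) s z : (forall x, x \in s -> (D %| x)%Z) -> ss s z -> (D %| z)%Z.
Proof.
elim: s z => [|x s IH] z Hs /=; first by move=> ->; apply: dvdz0.
have Hx := Hs x (mem_head _ _).
have Hs' : forall y, y \in s -> (D %| y)%Z by move=> y H; apply: Hs; rewrite inE H orbT.
move/ss_consP => [z0 /(IH _ Hs') H Hz]; case: Hz => ->; first done.
  exact: rpredD. exact: rpredB.
Qed.

Definition dlog (a g r : nat) : nat :=
  find (fun k => (g%:R : 'Z_a) ^+ k == r%:R) (iota 0 (totient a)).

Lemma dlogP a g r : (1 < a)%N -> primitive_root_mod a g -> coprime r a ->
  (g%:R : 'Z_a) ^+ dlog a g r = r%:R.
Proof.
move=> a1 Hg cr.
have ur : (r%:R : 'Z_a) \is a GRing.unit by rewrite unitZpE // coprime_sym.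
have [k Ek] := F2 a1 Hg ur.
have p0 : (0 < totient a)%N by rewrite totient_gt0; lia.
have Hh : has (fun k => (g%:R : 'Z_a) ^+ k == r%:R) (iota 0 (totient a)).
  apply/hasP; exists (k %% totient a)%N; first by rewrite mem_iota add0n ltn_pmod.
  by rewrite -gz_pow_mod // Ek.
have := nth_find 0%N Hh; rewrite /dlog nth_iota ?add0n; first by move/eqP.
by move: Hh; rewrite has_find size_iota.
Qed.

Lemma cyc_units p gam : prime p -> odd p -> (0 < gam)%N -> cyclic (units_Zp (p ^ gam)).
Proof.
move=> pp op g0; set q := (p ^ gam)%N.
have q1 : (1 < q)%N by rewrite /q -(expn0 p) ltn_exp2l ?prime_gt1.
pose a : 'I_(Zp_trunc q).+2 := Zp1.
have oa : #[a]%g = q by rewrite order_Zp1 Zp_cast.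
suff cA : cyclic (Aut <[a]>%g).
  by rewrite -oa (isog_cyclic (Zp_unit_isog a)).
have pG : (p.-group <[a]>)%g by rewrite pgroupE -orderE oa /q pnatX pnat_id.
have ntG : <[a]>%g != 1%g by rewrite -cardG_gt1 -orderE oa.
have [m [_ [_ cycF _ _] Hif]] := cyclic_pgroup_Aut_structure pG (cycle_cyclic a) ntG.
move: Hif; case: ifP => _; first by move=> ->.
by case=> t [_ _ _]; rewrite op; case=> [[cA _] _ _].
Qed.

Lemma prim_of_cyclic N : (1 < N)%N -> cyclic (units_Zp N) -> exists g, primitive_root_mod N g.
Proof.
move=> N1 /cyclicP [w Ew].
have ow : #[w]%g = totient N by rewrite orderE -Ew card_units_Zp //; lia.
exists (val (val w)).
have Eg : ((val (val w))%:R : 'Z_N) = val w by rewrite natr_Zp.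
split.
  by rewrite coprime_sym -unitZpE // Eg; apply: (valP w).
move=> k /andP [k0 kp] E.
have : (#[w]%g %| k)%N.
  rewrite order_dvdn unit_eq1 FinRing.val_unitX -Eg -natrX Zp1E; apply/eqP.
  by apply/natZp_eq.
by rewrite ow => /(dvdn_leq k0); lia.
Qed.

Lemma prim_exists p gam : prime p -> odd p -> (0 < gam)%N ->
  exists g, primitive_root_mod (p ^ gam) g.
Proof.
move=> pp op g0; apply: prim_of_cyclic; last exact: cyc_units.
by rewrite -(expn0 p) ltn_exp2l ?prime_gt1.
Qed.

Definition Kf a g r : int := (dlog a g r)%:Z.

Lemma dvd2m m (z : int) : ((2:int) ^+ m %| z)%Z = (2 ^ m %| `|z|)%N.
Proof. by rewrite dvdzE abszX. Qed.

Lemma core a g m d n :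
  (2 < a)%N -> primitive_root_mod a g -> totient a = (2 ^ m * d)%N -> odd d -> (0 < m)%N ->
  (0 < n)%N -> coprime n a ->
  (forall u : {unit 'Z_a}, u \in Hodd a ->
     exists2 r, r \in prime_factors_mult n & (r%:R : 'Z_a) = val u) ->
  [/\ nzk m.-1 (map (Kf a g) (Tseq a n)),
      has_rep a n <-> hit m.-1 (map (Kf a g) (Tseq a n)) &
      forall r, r \in prime_factors_mult n -> (r%:R : 'Z_a) = (g%:R : 'Z_a) ^ Kf a g r].
Proof.
move=> a2 Hg Ephi od m0 n0 cna Hcov.
have a1 : (1 < a)%N by lia.
set P := prime_factors_mult n; set gz := (g%:R : 'Z_a).
have gu : gz \is a GRing.unit := gz_unit a1 Hg.
have cop r : r \in P -> coprime r a.
  by move=> /mem_pfm [_ rn]; apply: coprime_dvdl rn cna.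
have HK r : r \in P -> (r%:R : 'Z_a) = gz ^ Kf a g r.
  by move=> Hr; rewrite /Kf -exprnP dlogP // cop.
have resH r : r \in P -> res_in_H a r = (2 ^ m %| dlog a g r)%N.
  move=> Hr; apply/existsP/idP => [[u /andP [uH /eqP Eu]] | H].
    by rewrite -(@F3 a g m d u (dlog a g r) a1 Hg Ephi od) // Eu dlogP // cop.
  have ur : (r%:R : 'Z_a) \is a GRing.unit by rewrite unitZpE // coprime_sym cop.
  exists (FinRing.Unit ur); apply/andP; split => //.
  by rewrite (@F3 a g m d _ (dlog a g r) a1 Hg Ephi od) //= dlogP // cop.
have Em : (m.-1).+1 = m by rewrite prednK.
have d0 : (0 < d)%N by case: (d) od.
have ev_phi : (2 %| totient a)%N by rewrite Ephi -(prednK m0) expnS -mulnA dvdn_mulr.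
set h := (totient a %/ 2)%N.
have Eh : h = (2 ^ m.-1 * d)%N.
  by rewrite /h Ephi -{1}(prednK m0) expnS -mulnA mulKn.
have gh : gz ^ (h%:Z) = -1 by rewrite -exprnP F4.
have Hh : ((2:int) ^+ m %| h%:Z - 2 ^+ m.-1)%Z.
  have [j Ej] : exists j, d = (j * 2).+1.
    by exists d./2; rewrite -{1}(odd_double_half d) od /= -muln2.
  have -> : h%:Z - 2 ^+ m.-1 = 2 ^+ m.-1 * 2 * j%:Z.
    rewrite Eh Ej PoszM -[(j * 2).+1]addn1 PoszD PoszM -[Posz (2 ^ _)%N]natz natrX; ring.
  by rewrite -exprSr Em; apply: dvdz_mulr; apply: dvdzz.
have Hphi : ((2:int) ^+ m %| (totient a)%:Z)%Z.
  by rewrite dvd2m absz_nat Ephi dvdn_mulr.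
have gm1 z : (gz ^ z == -1) = (totient a %| z - h%:Z)%Z.
  by rewrite -gh gz_eq.
split.
- move=> x /mapP [r]; rewrite mem_filter => /andP [nH Hr] ->.
  by rewrite Em dvd2m /Kf absz_nat -resH.
- split => [Hrep | [z1 [Hz1 Hd1]]].
    have [u [v [u0 v0 uvn auv]]] := divs_of_rep n0 cna Hrep.
    have allp : all prime P by apply/allP => r /mem_pfm [].
    have Hsp : sp P u v by apply: sp_of_dvd allp _; rewrite prod_pfm.
    have [z [Hz Euv]] := sp_ss gu HK Hsp.
    have cv : coprime v a.
      by apply: coprime_dvdl cna; apply: dvdn_trans (dvdn_mull u (dvdnn v)) uvn.
    have vu : (v%:R : 'Z_a) \is a GRing.unit by rewrite unitZpE // coprime_sym.
    have Eu : (u%:R : 'Z_a) = - v%:R.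
      have : ((u + v)%:R : 'Z_a) = 0%:R by apply/natZp_eq => //; rewrite mod0n; apply/eqP.
      by rewrite natrD mulr0n => /eqP; rewrite addr_eq0 => /eqP.
    have gzm1 : gz ^ z = -1.
      by apply: (mulrI vu); rewrite -Euv Eu mulrN1.
    have Hd : (totient a %| z - h%:Z)%Z by rewrite -gm1; apply/eqP.
    have [z1 [z2 [H1 H2 Ez]]] := ss_split (fun r => ~~ res_in_H a r) Hz.
    have d2 : ((2:int) ^+ m %| z2)%Z.
      apply: ss_dvd H2 => x /mapP [r]; rewrite mem_filter /= negbK => /andP [rh Hr] ->.
      by rewrite dvd2m /Kf absz_nat -resH.
    exists z1; split => //; rewrite Em.
    have -> : z1 - 2 ^+ m.-1 = (z - h%:Z) - z2 + (h%:Z - 2 ^+ m.-1) by rewrite Ez; ring.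
    apply: rpredD => //; apply: rpredB => //; exact: dvdz_trans Hphi Hd.
  rewrite Em in Hd1.
  set c := h%:Z - z1.
  have Hc : ((2:int) ^+ m %| c)%Z.
    have -> : c = (h%:Z - 2 ^+ m.-1) - (z1 - 2 ^+ m.-1) by rewrite /c; ring.
    exact: rpredB.
  set k := `|(c %% totient a)%Z|%N.
  have Ek : gz ^ c = gz ^+ k by apply: exprz_mod.
  have Hk : (2 ^ m %| k)%N.
    rewrite /k -dvd2m.
    have -> : (c %% totient a)%Z = c - (c %/ totient a)%Z * (totient a)%:Z.
      by rewrite {2}(divz_eq c (totient a)); ring.
    by apply: rpredB => //; apply: dvdz_mull.
  have cu : gz ^ c \is a GRing.unit := unitrXz c gu.
  have uH : FinRing.Unit cu \in Hodd a by rewrite (@F3 a g m d (FinRing.Unit cu) k).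
  have [r0 Hr0 Er0] := Hcov _ uH.
  have r0H : res_in_H a r0 by apply/existsP; exists (FinRing.Unit cu); rewrite uH -Er0 eqxx.
  have H2 : ss (map (Kf a g) (filter (predC (fun r => ~~ res_in_H a r)) P)) (Kf a g r0).
    by apply: ss_mem; apply: map_f; rewrite mem_filter /= r0H Hr0.
  have Hz := @ss_merge (Kf a g) (fun r => ~~ res_in_H a r) P _ _ Hz1 H2.
  have [u [v [Hsp Euv]]] := ss_sp gu HK Hz.
  have gzm1 : gz ^ (z1 + Kf a g r0) = -1.
    apply/eqP; rewrite gm1.
    have : (totient a %| Kf a g r0 - c)%Z by rewrite -(gz_eq _ _ a1 Hg) -HK // Er0.
    by have -> : z1 + Kf a g r0 - h%:Z = Kf a g r0 - c by rewrite /c; ring.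
  have auv : (a %| u + v)%N.
    have : ((u + v)%:R : 'Z_a) = 0%:R by rewrite natrD Euv gzm1 mulrN1 addNr.
    by move/natZp_eq => /(_ a1); rewrite mod0n => /eqP.
  have uvn : (u * v %| n)%N by rewrite -(prod_pfm n0); apply: sp_dvd.
  have : (0 < u * v)%N by apply: dvdn_gt0 uvn.
  rewrite muln_gt0 => /andP [u0 v0].
  apply: (rep_of_divs n0 u0 v0 (dvdn_trans (dvdn_mulr v (dvdnn u)) uvn)
     (dvdn_trans (dvdn_mull u (dvdnn v)) uvn) auv); lia.
- exact: HK.
Qed.

Unset Implicit Arguments.

Theorem lemma2p6 (p gam m d n : nat) :
  prime p -> odd p -> (0 < gam)%N ->
  totient (p ^ gam) = (2 ^ m * d)%N -> odd d ->
  (0 < n)%N -> coprime n (p ^ gam) ->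
  (forall u : {unit 'Z_(p ^ gam)}, u \in Hodd (p ^ gam) ->
     exists2 r, r \in prime_factors_mult n & (r%:R : 'Z_(p ^ gam)) = val u) ->
  ((2 ^ m.-1 <= size (Tseq (p ^ gam) n))%N -> ~ in_Estar (p ^ gam) n) /\
  (forall g : nat, primitive_root_mod (p ^ gam) g ->
     size (Tseq (p ^ gam) n) = (2 ^ m.-1 - 1)%N ->
     (in_Estar (p ^ gam) n <->
      exists e : int, odd `|e|%N /\
        forall r, r \in Tseq (p ^ gam) n ->
          exists e' : int,
            (r%:R : 'Z_(p ^ gam)) = (g%:R : 'Z_(p ^ gam)) ^ e' /\
            ((e' == e %[mod (2 ^ m)%N])%Z || (e' == - e %[mod (2 ^ m)%N])%Z))).
Proof.
move=> pp op g0 Ephi od n0 cna Hcov.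
have p3 : (2 < p)%N.
  have := prime_gt1 pp; case: (p) op => [|[|[|]]] //.
have a2 : (2 < p ^ gam)%N.
  apply: (leq_trans p3); rewrite -{1}(expn1 p); apply: leq_pexp2l => //; lia.
have m0 : (0 < m)%N.
  case: m Ephi => // Ephi; move: Ephi; rewrite expn0 mul1n totient_pfactor // => Ed.
  have ep : ~~ odd p.-1 by case: (p) op.
  by move: od; rewrite -Ed oddM (negbTE ep).
have Hphi : ((2:int) ^+ m %| (totient (p ^ gam))%:Z)%Z.
  by rewrite dvd2m absz_nat Ephi dvdn_mulr.
have Em : (m.-1).+1 = m by rewrite prednK.
split.
  move=> Ht [_ Hnr _]; have [g Hg] := prim_exists pp op g0.
  have [C1 C2 _] := core a2 Hg Ephi od m0 n0 cna Hcov.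
  by apply: Hnr; apply/C2; apply: hit_big => //; rewrite size_map.
move=> g Hg Ht.
have a1 : (1 < p ^ gam)%N by lia.
have [C1 C2 C3] := core a2 Hg Ephi od m0 n0 cna Hcov.
have inP r : r \in Tseq (p ^ gam) n -> r \in prime_factors_mult n.
  by rewrite mem_filter => /andP [].
split.
  move=> [_ Hnr _]; have Hnh : ~ hit m.-1 (map (Kf (p ^ gam) g) (Tseq (p ^ gam) n)).
    by move/C2.
  have [m' Em'] : exists m', m = m'.+1 by exists m.-1; rewrite prednK.
  subst m; case: m' m0 Ephi Hphi Em Ht C1 C2 C3 Hnh => [|k] m0 Ephi Hphi Em Ht C1 C2 C3 Hnh.
    by exists 1; split => // r; move: Ht; rewrite /= => /size0nil ->.
  rewrite /= in C1 Hnh Ht.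
  have [e [oe He]] : exists e, ~~ ev e /\ forall x, x \in map (Kf (p ^ gam) g) (Tseq (p ^ gam) n) ->
      ((2:int) ^+ k.+2 %| x - e)%Z || ((2:int) ^+ k.+2 %| x + e)%Z.
    apply: pm => //; rewrite size_map Ht subn1 prednK //; exact: expn_gt0.
  exists e; split.
    by move: oe; rewrite /ev dvdzE dvdn2 negbK.
  move=> r Hr; exists (Kf (p ^ gam) g r); split; first by apply: C3; apply: inP.
  have := He _ (map_f _ Hr).
  by rewrite !eqz_mod_dvd opprK !dvdzE absz_nat abszX.
move=> [e [oe He]]; split => //.
move/C2 => Hh; apply: (nohit (e := e)) Hh.
- by rewrite /ev dvdzE dvdn2 negbK.
- move=> x /mapP [r Hr ->]; have [e' [Er He']] := He r Hr.
  have H1 : ((2:int) ^+ m %| Kf (p ^ gam) g r - e')%Z.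
    apply: dvdz_trans Hphi _; rewrite -(gz_eq _ _ a1 Hg) -C3 ?inP //; apply/eqP.
    by rewrite Er.
  rewrite Em; move: He'; rewrite !eqz_mod_dvd opprK.
  have -> : Posz (2 ^ m)%N = (2:int) ^+ m by rewrite -natz natrX.
  case/orP => H2; apply/orP; [left | right].
    have -> : Kf (p ^ gam) g r - e = (Kf (p ^ gam) g r - e') + (e' - e) by ring.
    exact: rpredD.
  have -> : Kf (p ^ gam) g r + e = (Kf (p ^ gam) g r - e') + (e' + e) by ring.
  exact: rpredD.
- by rewrite size_map Ht subn1 prednK ?expn_gt0 // ltnn.
Qed.
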